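(* Let $a,b,c,d$ be positive integers with $d<b\le c$ and $b\equiv c\pmod 2$, and let $s=\tfrac12 b+\tfrac12 c$. Then $$K_3:=\frac{s^{2s^2}}{b^{b^2}c^{c^2}}\cdot\frac{(a+s-d)^{2(a+s-d)^2}}{(a+b-d)^{(a+b-d)^2}(a+c-d)^{(a+c-d)^2}}\cdot\frac{(b-d)^{(b-d)^2}(c-d)^{(c-d)^2}}{(s-d)^{2(s-d)^2}}\cdot\frac{(a+b)^{(a+b)^2}(a+c)^{(a+c)^2}}{(a+s)^{2(a+s)^2}}\le 1,$$ with strict inequality unless $b=c$. Moreover, for positive integers $a,d,c$ with $d<c$, $$\frac{a^{a}d^{d}c^{c}(a+c-d)^{a+c-d}}{(a+d)^{a+d}(a+c)^{a+c}(c-d)^{c-d}}<1.$$ *)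

(* Defs.v *)
From mathcomp Require Import all_boot all_order all_algebra.
Set Implicit Arguments. Unset Strict Implicit. Unset Printing Implicit Defensive.
Import Order.TTheory GRing.Theory Num.Theory.
Local Open Scope ring_scope.

Definition Epow (x k : nat) : rat := (x%:Q) ^+ (k * x ^ 2)%N.

(* s = (b + c)/2 (exact when b = c mod 2). *)
Definition shalf (b c : nat) : nat := (b + c)./2.

Definition K3 (a b c d : nat) : rat :=
  let s := shalf b c in
  (Epow s 2 / (Epow b 1 * Epow c 1))
  * (Epow (a + s - d) 2 / (Epow (a + b - d) 1 * Epow (a + c - d) 1))
  * ((Epow (b - d) 1 * Epow (c - d) 1) / Epow (s - d) 2)
  * ((Epow (a + b) 1 * Epow (a + c) 1) / Epow (a + s) 2).

Definition selfpow (x : nat) : rat := (x%:Q) ^+ x.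

Definition K2 (a d c : nat) : rat :=
  (selfpow a * selfpow d * selfpow c * selfpow (a + c - d))
  / (selfpow (a + d) * selfpow (a + c) * selfpow (c - d)).

(* Main.v *)
Require Import Defs.
From Stdlib Require Import Reals Lra Lia.
From Coquelicot Require Import Coquelicot.
From mathcomp Require Import all_boot all_order all_algebra.
Import Order.TTheory GRing.Theory Num.Theory.
From mathcomp Require Import zify.
From mathcomp Require Import Rstruct.

Section Analysis.
Local Open Scope R_scope.
Lemma mono_gen (F dF : R -> R) lo x y :
  (forall z, lo < z -> is_derive F z (dF z)) ->
  lo < x -> x < y -> exists c, lo < c /\ x <= c <= y /\ F y - F x = dF c * (y - x).
Proof.
move=> HD hx hxy.
destruct (MVT_gen F x y dF) as [c [hc he]].
- move=> z; rewrite Rmin_left ?Rmax_right; try lra. move=> hz; apply HD; lra.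
- move=> z; rewrite Rmin_left ?Rmax_right; try lra. move=> hz.
  apply continuity_pt_filterlim. apply: ex_derive_continuous.
  eexists; apply HD; lra.
- move: hc he; rewrite Rmin_left ?Rmax_right; try lra. move=> hc he.
  exists c; split; [lra|split;[lra|exact he]].
Qed.

Lemma mono_le (F dF : R -> R) lo x y :
  (forall z, lo < z -> is_derive F z (dF z)) ->
  (forall z, lo < z -> dF z <= 0) ->
  lo < x -> x <= y -> F y <= F x.
Proof.
move=> HD Hn hx hxy. destruct (Req_dec x y) as [->|hne]; first lra.
have [c [h1 [h2 h3]]] := mono_gen F dF lo x y HD hx ltac:(lra).
have := Hn c h1. nra.
Qed.

Lemma mono_lt (F dF : R -> R) lo x y :
  (forall z, lo < z -> is_derive F z (dF z)) ->
  (forall z, lo < z -> dF z < 0) ->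
  lo < x -> x < y -> F y < F x.
Proof.
move=> HD Hn hx hxy.
have [c [h1 [h2 h3]]] := mono_gen F dF lo x y HD hx hxy.
have := Hn c h1. nra.
Qed.

Definition g x := x^2 * ln x.
Definition g1 x := 2 * x * ln x + x.
Definition g2 x := 2 * ln x + 3.

Lemma g_d x : 0 < x -> is_derive g x (g1 x).
Proof. move=> hx; rewrite /g /g1. auto_derive; first lra. field. lra. Qed.
Lemma g1_d x : 0 < x -> is_derive g1 x (g2 x).
Proof. move=> hx; rewrite /g1 /g2. auto_derive; first lra. field. lra. Qed.

Section Core.
Variables e : R.
Hypothesis he : 0 <= e.
Definition GG x := g (x+e) + g (x-e) - 2 * g x.
Definition GG1 x := g1 (x+e) + g1 (x-e) - 2 * g1 x.
Definition GG2 x := g2 (x+e) + g2 (x-e) - 2 * g2 x.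

Lemma GG_d x : e < x -> is_derive GG x (GG1 x).
Proof.
move=> hx. rewrite /GG /GG1 /g /g1.
auto_derive; first (repeat split; lra). rewrite /Rminus; field; lra.
Qed.

Lemma GG_ds c x : e < x + c -> is_derive (fun x => GG (x + c)) x (GG1 (x + c)).
Proof.
move=> hx. rewrite /GG /GG1 /g /g1.
auto_derive; first (repeat split; lra). rewrite /Rminus; field; lra.
Qed.

Lemma GG1_d x : e < x -> is_derive GG1 x (GG2 x).
Proof.
move=> hx. rewrite /GG1 /GG2 /g1 /g2.
auto_derive; first (repeat split; lra). rewrite /Rminus; field; lra.
Qed.

Lemma GG2_le x : e < x -> GG2 x <= 0.
Proof.
move=> hx. rewrite /GG2 /g2.
have : ln ((x+e)*(x-e)) <= ln (x*x) by apply ln_le; nra.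
rewrite !ln_mult; lra.
Qed.

Lemma GG2_lt x : 0 < e -> e < x -> GG2 x < 0.
Proof.
move=> he' hx. rewrite /GG2 /g2.
have : ln ((x+e)*(x-e)) < ln (x*x) by apply ln_increasing; nra.
rewrite !ln_mult; lra.
Qed.

Lemma core_le u a d : e < u -> 0 < a -> 0 < d ->
  GG u + GG (u + a + d) - GG (u + a) - GG (u + d) <= 0.
Proof.
move=> hu ha hd.
have := mono_le (fun x => GG (x + a) - GG x) (fun x => GG1 (x+a) - GG1 x) e u (u+d).
have -> : u + a + d = u + d + a by ring.
move=> H; have : GG (u + d + a) - GG (u + d) <= GG (u + a) - GG u; last lra.
apply H; try lra.
- move=> z hz. apply: is_derive_minus; last by apply GG_d.
  apply GG_ds; lra.
- move=> z hz.
  have := mono_le GG1 GG2 e z (z+a) GG1_d GG2_le hz ltac:(lra). lra.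
Qed.

Lemma core_lt u a d : 0 < e -> e < u -> 0 < a -> 0 < d ->
  GG u + GG (u + a + d) - GG (u + a) - GG (u + d) < 0.
Proof.
move=> he' hu ha hd.
have := mono_lt (fun x => GG (x + a) - GG x) (fun x => GG1 (x+a) - GG1 x) e u (u+d).
have -> : u + a + d = u + d + a by ring.
move=> H; have : GG (u + d + a) - GG (u + d) < GG (u + a) - GG u; last lra.
apply H; try lra.
- move=> z hz. apply: is_derive_minus; last by apply GG_d.
  apply GG_ds; lra.
- move=> z hz.
  have := mono_lt GG1 GG2 e z (z+a) GG1_d (fun z hz => GG2_lt z he' hz) hz ltac:(lra). lra.
Qed.
End Core.

Definition h x := x * ln x.

Lemma core2 a d c : 0 < a -> 0 < d -> d < c ->
  h a + h d + h c + h (a + c - d) - h (a + d) - h (a + c) - h (c - d) < 0.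
Proof.
move=> ha hd hc.
have h1 : h a + h d < h (a + d).
  rewrite /h. have := ln_increasing a (a+d) ha ltac:(lra).
  have := ln_increasing d (a+d) hd ltac:(lra). nra.
have h2 : h c - h (c + a) <= h (c - d) - h (c - d + a).
  have := mono_le (fun x => h x - h (x + a)) (fun x => ln x - ln (x + a)) 0 (c - d) c.
  move=> H; apply H; try lra.
  - move=> z hz. rewrite /h.
    auto_derive; first lra. field. lra.
  - move=> z hz. have := ln_increasing z (z+a) hz ltac:(lra). lra.
have -> : a + c - d = c - d + a by ring.
have -> : a + c = c + a by ring.
lra.
Qed.

End Analysis.

Section Bridge.
Local Open Scope R_scope.

Lemma INR_pos (n : nat) : (0 < n)%N -> 0 < INR n.
Proof. move=> h; apply lt_0_INR; lia. Qed.

Lemma Epow_exp (f : {rmorphism rat -> R}) x k : (0 < x)%N -> f (Epow x k) = exp (INR k * g (INR x)).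
Proof.
move=> hx. rewrite /Epow rmorphXn rmorph_int -pmulrn -INRE -RpowE.
have hp := INR_pos _ hx.
rewrite -(exp_ln (INR x ^ _)); last by apply pow_lt.
rewrite ln_pow // -mulnn !mult_INR /g. congr exp. simpl. ring.
Qed.

Lemma selfpow_exp (f : {rmorphism rat -> R}) x : (0 < x)%N -> f (selfpow x) = exp (h (INR x)).
Proof.
move=> hx. rewrite /selfpow rmorphXn rmorph_int -pmulrn -INRE -RpowE.
have hp := INR_pos _ hx.
rewrite -(exp_ln (INR x ^ _)); last by apply pow_lt.
by rewrite ln_pow.
Qed.

Lemma expM a b : exp a * exp b = exp (a + b).
Proof. by rewrite exp_plus. Qed.
Lemma expV a : / exp a = exp (- a).
Proof. by rewrite exp_Ropp. Qed.

Lemma exp_le1 E : E <= 0 -> exp E <= 1.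
Proof.
move=> hE; rewrite -exp_0. case: (Rle_lt_or_eq_dec _ _ hE) => [hl|->]; last lra.
by apply Rlt_le, exp_increasing.
Qed.
Lemma exp_lt1 E : E < 0 -> exp E < 1.
Proof. move=> hE; rewrite -exp_0. by apply exp_increasing. Qed.

End Bridge.

Section Pts.
Local Open Scope R_scope.
Lemma core3 e u a d q0 q1 q2 q3 q4 q5 q6 q7 q8 q9 q10 q11 :
  0 <= e -> e < u -> 0 < a -> 0 < d ->
  q0 = u+e -> q1 = u - e -> q2 = u -> q3 = u+a+d+e -> q4 = u+a+d-e -> q5 = u+a+d ->
  q6 = u+a+e -> q7 = u+a-e -> q8 = u+a -> q9 = u+d+e -> q10 = u+d-e -> q11 = u+d ->
  g q0 + g q1 - 2*g q2 + (g q3 + g q4 - 2*g q5) - (g q6 + g q7 - 2*g q8)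
    - (g q9 + g q10 - 2 * g q11) <= 0 /\
  (0 < e -> g q0 + g q1 - 2*g q2 + (g q3 + g q4 - 2*g q5) - (g q6 + g q7 - 2*g q8)
    - (g q9 + g q10 - 2 * g q11) < 0).
Proof.
move=> he hu ha hd -> -> -> -> -> -> -> -> -> -> -> ->.
split.
- have := core_le e he u a d hu ha hd. rewrite /GG. lra.
- move=> he'. have := core_lt e he u a d he' hu ha hd. rewrite /GG. lra.
Qed.

Lemma core2' a d c q0 q1 q2 q3 :
  0 < a -> 0 < d -> d < c -> q0 = a + c - d -> q1 = a + d -> q2 = a + c -> q3 = c - d ->
  h a + h d + h c + h q0 - h q1 - h q2 - h q3 < 0.
Proof. move=> ha hd hc -> -> -> ->. exact: core2. Qed.

Lemma INR_add n m : INR (n + m)%N = INR n + INR m.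
Proof. exact: plus_INR. Qed.
Lemma INR_sub n m : (m <= n)%N -> INR (n - m)%N = INR n - INR m.
Proof. move=> h; apply: minus_INR; lia. Qed.
Lemma INR_mul n m : INR (n * m)%N = INR n * INR m.
Proof. exact: mult_INR. Qed.
Lemma part1_real (a b c d s : nat) : (0<a)%N -> (0<b)%N -> (0<c)%N -> (0<d)%N ->
  (d<b)%N -> (b<=c)%N -> (2*s = b+c)%N ->
  exp (INR 2 * g (INR s) + - (INR 1 * g (INR b) + INR 1 * g (INR c)) +
    (INR 2 * g (INR (a + s - d)) +
     - (INR 1 * g (INR (a + b - d)) + INR 1 * g (INR (a + c - d)))) +
    (INR 1 * g (INR (b - d)) + INR 1 * g (INR (c - d)) +
     - (INR 2 * g (INR (s - d)))) +
    (INR 1 * g (INR (a + b)) + INR 1 * g (INR (a + c)) +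
     - (INR 2 * g (INR (a + s))))) <= 1 /\ (b <> c -> exp (INR 2 * g (INR s) + - (INR 1 * g (INR b) + INR 1 * g (INR c)) +
    (INR 2 * g (INR (a + s - d)) +
     - (INR 1 * g (INR (a + b - d)) + INR 1 * g (INR (a + c - d)))) +
    (INR 1 * g (INR (b - d)) + INR 1 * g (INR (c - d)) +
     - (INR 2 * g (INR (s - d)))) +
    (INR 1 * g (INR (a + b)) + INR 1 * g (INR (a + c)) +
     - (INR 2 * g (INR (a + s))))) < 1).
Proof.
move=> ha hb hc hd hdb hbc hs.
have i1 : INR 1 = 1 by [].
have i2 : INR 2 = 2 by rewrite /=; lra.
rewrite i1 i2.
have hS : 2 * INR s = INR b + INR c by rewrite -i2 -INR_mul -INR_add hs.
have hA := lt_0_INR a ltac:(lia).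
have hD := lt_0_INR d ltac:(lia).
have hBD : INR d < INR b by apply lt_INR; lia.
have hBC : INR b <= INR c by apply le_INR; lia.
have [H1 H2] := core3 (INR s - INR b) (INR s - INR d) (INR a) (INR d)
  (INR (c - d)) (INR (b - d)) (INR (s - d)) (INR (a + c)) (INR (a + b)) (INR (a + s))
  (INR (a + c - d)) (INR (a + b - d)) (INR (a + s - d)) (INR c) (INR b) (INR s)
  ltac:(lra) ltac:(lra) hA hD
  ltac:(rewrite INR_sub; [lra|lia]) ltac:(rewrite INR_sub; [lra|lia])
  ltac:(rewrite INR_sub; [lra|lia]) ltac:(rewrite INR_add; lra)
  ltac:(rewrite INR_add; lra) ltac:(rewrite INR_add; lra)
  ltac:(rewrite INR_sub ?INR_add; [lra|lia]) ltac:(rewrite INR_sub ?INR_add; [lra|lia])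
  ltac:(rewrite INR_sub ?INR_add; [lra|lia]) ltac:(lra) ltac:(lra) ltac:(lra).
split.
- apply exp_le1. lra.
- move=> hne. apply exp_lt1.
  have : INR b < INR s by apply lt_INR; lia.
  move=> hbs. have := H2 ltac:(lra). lra.
Qed.

Lemma part2_real (a d c : nat) : (0 < a)%N -> (0 < d)%N -> (0 < c)%N -> (d < c)%N ->
  exp (h (INR a) + h (INR d) + h (INR c) + h (INR (a + c - d)) +
    - (h (INR (a + d)) + h (INR (a + c)) + h (INR (c - d)))) < 1.
Proof.
move=> ha hd hc hdc.
apply exp_lt1.
have hA := lt_0_INR a ltac:(lia).
have hD := lt_0_INR d ltac:(lia).
have hDC : INR d < INR c by apply lt_INR; lia.
have := core2' (INR a) (INR d) (INR c) (INR (a + c - d)) (INR (a + d)) (INR (a + c)) (INR (c - d))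
  hA hD hDC
  ltac:(rewrite INR_sub ?INR_add; [lra|lia]) ltac:(rewrite INR_add; lra)
  ltac:(rewrite INR_add; lra) ltac:(rewrite INR_sub; [lra|lia]).
lra.
Qed.

End Pts.

Local Open Scope ring_scope.

Lemma shalf_spec b c : b = c %[mod 2] -> (2 * shalf b c = b + c)%N.
Proof.
move=> hm. rewrite /shalf.
have hbc : odd b = odd c by move: hm; rewrite !modn2; case: (odd b); case: (odd c).
have ho : odd (b + c) = false by rewrite oddD hbc addbb.
have := odd_double_half (b+c). rewrite ho add0n -muln2. lia.
Qed.

Lemma part1 a b c d : (0<a)%N -> (0<b)%N -> (0<c)%N -> (0<d)%N -> (d<b)%N -> (b<=c)%N ->
  b = c %[mod 2] -> K3 a b c d <= 1 /\ (b <> c -> K3 a b c d < 1).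
Proof.
move=> ha hb hc hd hdb hbc hmod.
have hs := shalf_spec _ _ hmod.
rewrite /K3; cbv zeta. move: (shalf b c) hs => s hs.
rewrite -(ler_rat R) -(ltr_rat R) rmorph1.
rewrite !(rmorphM, fmorph_div, fmorphV) !Epow_exp; try lia.
rewrite -!RinvE -!RmultE !(expM, expV).
have [h1 h2] := part1_real a b c d s ha hb hc hd hdb hbc hs.
split; [apply/RleP; exact h1 | move=> hne; apply/RltP; exact: h2 hne].
Qed.

Lemma part2 a d c : (0 < a)%N -> (0 < d)%N -> (0 < c)%N -> (d < c)%N -> K2 a d c < 1.
Proof.
move=> ha hd hc hdc.
rewrite /K2 -(ltr_rat R) rmorph1.
rewrite !(rmorphM, fmorph_div, fmorphV) !selfpow_exp; try lia.
rewrite -!RinvE -!RmultE !(expM, expV).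
apply/RltP; exact: part2_real.
Qed.

Theorem mainTheorem8 :
  (forall a b c d : nat,
      (0 < a)%N -> (0 < b)%N -> (0 < c)%N -> (0 < d)%N ->
      (d < b)%N -> (b <= c)%N -> b = c %[mod 2] ->
      K3 a b c d <= 1 /\ (b <> c -> K3 a b c d < 1))
  /\
  (forall a d c : nat,
      (0 < a)%N -> (0 < d)%N -> (0 < c)%N -> (d < c)%N ->
      K2 a d c < 1).
Proof.
split; [exact: part1 | exact: part2].
Qed.
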